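(* For $\sigma>0$ let $k_\sigma(x,y) = \exp(-\|x-y\|^2/(2\sigma^2))$ be the Gaussian kernel on $\mathbb R^d$, and let $\langle\cdot,\cdot\rangle_{\sigma'}$ denote the inner product of the RKHS $\mathcal H_{\sigma'}$ of $k_{\sigma'}$. Then for all $x,y,a,b\in\mathbb R^d$, $$\langle k_\sigma(x,\cdot)k_\sigma(y,\cdot),\ k_\sigma(a,\cdot)k_\sigma(b,\cdot)\rangle_{\sigma/\sqrt2} = k_{\sigma\sqrt2}(x,a)\,k_{\sigma\sqrt2}(x,b)\,k_{\sigma\sqrt2}(y,a)\,k_{\sigma\sqrt2}(y,b).$$ *)

(* Defs.v *)
From HB Require Import structures.
From mathcomp Require Import all_boot all_order all_algebra.
From mathcomp Require Import reals.
From mathcomp Require Import sequences exp.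
From Stdlib Require Import ClassicalEpsilon.
Set Implicit Arguments. Unset Strict Implicit. Unset Printing Implicit Defensive.
Import Order.TTheory GRing.Theory Num.Theory.
Local Open Scope ring_scope.

Definition sqnorm (R : realType) (d : nat) (x : 'rV[R]_d) : R :=
  \sum_(i < d) (x ord0 i) ^+ 2.

Definition gauss (R : realType) (d : nat) (s : R) (x y : 'rV[R]_d) : R :=
  expR (- sqnorm (x - y) / (2 * s ^+ 2)).

Definition span_fun (R : realType) (d : nat) (s : R)
    (l : seq (R * 'rV[R]_d)) : 'rV[R]_d -> R :=
  fun u => \sum_(p <- l) p.1 * gauss s p.2 u.

(* a representation of f as an element of span{k_s(z,.)} (chosen by
   classical choice; arbitrary if f is not in the span) *)
Definition span_rep (R : realType) (d : nat) (s : R) (f : 'rV[R]_d -> R)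
    : seq (R * 'rV[R]_d) :=
  epsilon (inhabits [::]) (fun l => f = span_fun s l).

(* RKHS inner product of H_s on the dense subspace span{k_s(z,.)}:
   < sum a_i k(x_i,.), sum b_j k(y_j,.) > = sum_ij a_i b_j k(x_i,y_j) *)
Definition rkhs_inner (R : realType) (d : nat) (s : R)
    (f g : 'rV[R]_d -> R) : R :=
  \sum_(p <- span_rep s f) \sum_(q <- span_rep s g) p.1 * q.1 * gauss s p.2 q.2.

(* Main.v *)
Require Import Defs.
From HB Require Import structures.
From mathcomp Require Import all_boot all_order all_algebra.
From mathcomp Require Import reals.
From mathcomp Require Import sequences exp.
From mathcomp Require Import ring lra.
Import Order.TTheory GRing.Theory Num.Theory.
Local Open Scope ring_scope.
Definition mid {R : realType} {d} (x y : 'rV[R]_d) : 'rV[R]_d := 2^-1 *: (x + y).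

Lemma gauss_prod (R : realType) d s (x y u : 'rV[R]_d) : 0 < s ->
  gauss s x u * gauss s y u =
  expR (- sqnorm (x - y) / (4 * s ^+ 2)) * gauss (s / Num.sqrt 2) (mid (R:=R) x y) u.
Proof.
move=> hs.
have s2 : (s / Num.sqrt 2) ^+ 2 = s ^+ 2 / 2.
  by rewrite expr_div_n sqr_sqrtr // ler0n.
rewrite /gauss -!expRD s2.
have E : sqnorm (x - u) + sqnorm (y - u) =
   sqnorm (x - y) / 2 + 2 * sqnorm (mid x y - u).
  rewrite /sqnorm -big_split mulr_suml mulr_sumr -big_split.
  apply: eq_bigr => i _; by rewrite !mxE /=; field.
move: E; move: (sqnorm (x - u)) (sqnorm (y - u)) (sqnorm (x - y)) (sqnorm (mid x y - u)) => A B C D E.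
have hs0 : s != 0 by rewrite gt_eqF.
apply: congr1.
have -> : A = C / 2 + 2 * D - B by rewrite -E addrK.
by field; rewrite hs0.
Qed.

From Stdlib Require Import ClassicalEpsilon FunctionalExtensionality.

Lemma sqnorm_sym (R : realType) d (x y : 'rV[R]_d) : sqnorm (x - y) = sqnorm (y - x).
Proof.
by rewrite /sqnorm; apply: eq_bigr => i _; rewrite !mxE -sqrrN opprB.
Qed.

Lemma gauss_sym (R : realType) d s (x y : 'rV[R]_d) : gauss s x y = gauss s y x.
Proof. by rewrite /gauss sqnorm_sym. Qed.

Lemma rep_ok (R : realType) d s (f : 'rV[R]_d -> R) l :
  f = span_fun s l -> f = span_fun s (span_rep s f).
Proof.
move=> H; rewrite /span_rep.
exact: (epsilon_spec (inhabits [::]) (fun l => f = span_fun s l) (ex_intro _ l H)).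
Qed.

Lemma rkhs_eval (R : realType) d s (f g : 'rV[R]_d -> R) :
  g = span_fun s (span_rep s g) ->
  rkhs_inner s f g = \sum_(p <- span_rep s f) p.1 * g p.2.
Proof.
move=> E; rewrite /rkhs_inner; apply: eq_bigr => p _.
have -> : g p.2 = span_fun s (span_rep s g) p.2 by exact: (congr1 (fun h => h p.2) E).
rewrite /span_fun big_distrr; apply: eq_bigr => q _.
by rewrite gauss_sym /= mulrA.
Qed.

Lemma final_id (R : realType) d (s : R) (x y a b : 'rV[R]_d) : 0 < s ->
  expR (- sqnorm (a - b) / (4 * s ^+ 2)) *
   (expR (- sqnorm (x - y) / (4 * s ^+ 2)) *
    gauss (s / Num.sqrt 2) (mid x y) (mid a b))
  = gauss (s * Num.sqrt 2) x a * gauss (s * Num.sqrt 2) x b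
    * gauss (s * Num.sqrt 2) y a * gauss (s * Num.sqrt 2) y b.
Proof.
move=> hs.
have s2 : (s / Num.sqrt 2) ^+ 2 = s ^+ 2 / 2.
  by rewrite expr_div_n sqr_sqrtr // ler0n.
have s2' : (s * Num.sqrt 2) ^+ 2 = s ^+ 2 * 2.
  by rewrite exprMn sqr_sqrtr // ler0n.
rewrite /gauss -!expRD s2 s2'.
have E : sqnorm (x - y) + sqnorm (a - b) + 4 * sqnorm (mid x y - mid a b) =
   sqnorm (x - a) + sqnorm (x - b) + sqnorm (y - a) + sqnorm (y - b).
  rewrite /sqnorm mulr_sumr -!big_split.
  by apply: eq_bigr => i _; rewrite !mxE /=; field.
move: E; move: (sqnorm (x - y)) (sqnorm (a - b)) (sqnorm (mid x y - mid a b))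
  (sqnorm (x - a)) (sqnorm (x - b)) (sqnorm (y - a)) (sqnorm (y - b)) => A B C D F G H E.
have hs0 : s != 0 by rewrite gt_eqF.
apply: congr1.
have -> : A = D + F + G + H - B - 4 * C by rewrite -E; ring.
by field; rewrite hs0.
Qed.

Theorem lemma5 (R : realType) (d : nat) (sigma : R) (hsigma : 0 < sigma)
    (x y a b : 'rV[R]_d) :
  rkhs_inner (sigma / Num.sqrt 2)
    (fun u => gauss sigma x u * gauss sigma y u)
    (fun u => gauss sigma a u * gauss sigma b u)
  = gauss (sigma * Num.sqrt 2) x a * gauss (sigma * Num.sqrt 2) x b
    * gauss (sigma * Num.sqrt 2) y a * gauss (sigma * Num.sqrt 2) y b.
Proof.
set s' := sigma / Num.sqrt 2.
set F := (fun u => gauss sigma x u * gauss sigma y u).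
set G := (fun u => gauss sigma a u * gauss sigma b u).
have hf : F = span_fun s' [:: (expR (- sqnorm (x - y) / (4 * sigma ^+ 2)), mid x y)].
  by apply: functional_extensionality => u; rewrite /F gauss_prod // /span_fun big_seq1.
have hg : G = span_fun s' [:: (expR (- sqnorm (a - b) / (4 * sigma ^+ 2)), mid a b)].
  by apply: functional_extensionality => u; rewrite /G gauss_prod // /span_fun big_seq1.
rewrite (@rkhs_eval _ _ _ _ _ (@rep_ok _ _ _ _ _ hg)).
have -> : \sum_(p <- span_rep s' F) p.1 * G p.2 =
    expR (- sqnorm (a - b) / (4 * sigma ^+ 2)) * span_fun s' (span_rep s' F) (mid a b).
  rewrite /span_fun big_distrr; apply: eq_bigr => p _.
  by rewrite /G gauss_prod // gauss_sym mulrCA.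
rewrite -(congr1 (fun h => h (mid a b)) (@rep_ok _ _ _ _ _ hf)) /F gauss_prod //.
exact: final_id.
Qed.
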